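(* Let $f\in\mathbb{C}[h]$, $n\in\mathbb{N}$ and $\dot z\in\mathbb{C}$ with $\dot z+f^{(n)}(-\dot z)=0$. (1) The formulas $yt^i=(\dot z+f^{(i)}(-\dot z))t^{i-1}$, $ht^i=f^{(i)}(-\dot z)t^i$, $xt^i=t^{i+1}$ for $i=0,1,\dots,n-1$ define an $\mathcal{H}(f)$-module structure $C_{\mathcal{H}(f)}(\dot z,n)$ on $\mathbb{C}[t]/(t^n)$ (with basis the classes of $1,t,\dots,t^{n-1}$; here $t^{-1}:=0$ and $t^n=0$). (2) $C_{\mathcal{H}(f)}(\dot z,n)$ is a simple $\mathcal{H}(f)$-module if and only if $\dot z+f^{(i)}(-\dot z)\neq 0$ for all $i=1,2,\dots,n-1$.
   Context: For $f(h)\in\mathbb{C}[h]$, $\mathcal{H}(f)$ is the unital associative $\mathbb{C}$-algebra generated by $x,y,h$ with relations $hx=xf(h)$, $yh=f(h)y$, $yx-xy=f(h)-h$. Iterates: $f^{(0)}(h)=h$, $f^{(1)}=f$, $f^{(i+1)}(h)=f(f^{(i)}(h))$. $\mathbb{N}$ denotes the positive integers. *)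

(* Defs.v *)
From HB Require Import structures.
From mathcomp Require Import all_boot all_order all_algebra.
Set Implicit Arguments. Unset Strict Implicit. Unset Printing Implicit Defensive.
Import Order.TTheory GRing.Theory Num.Theory.
Local Open Scope ring_scope.

Section HfDefs.
Variable F : fieldType.

Definition fiter (f : {poly F}) (i : nat) : {poly F} := iter i (fun g => f \Po g) 'X.

Definition mxeval (n : nat) (p : {poly F}) (A : 'M[F]_n) : 'M[F]_n :=
  \sum_(i < size p) p`_i *: A ^+ i.

(* Convention: an element a of H(f) acts on row vectors v in F^n by
   v |-> v *m M(a).  Hence M(a b) = M(b) *m M(a).  A triple (X, Y, H) of
   matrices defines an H(f)-module structure on F^n (x, y, h acting by
   X, Y, H) iff the defining relations of H(f) hold:
     hx = x f(h),  yh = f(h) y,  yx - xy = f(h) - h. *)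
Definition Hf_module (f : {poly F}) (n : nat) (X Y H : 'M[F]_n) : Prop :=
  [/\ X *m H = mxeval f H *m X,
      H *m Y = Y *m mxeval f H
    & X *m Y - Y *m X = mxeval f H - H].

Definition Hf_simple (n : nat) (X Y H : 'M[F]_n) : Prop :=
  (0 < n)%N /\
  forall U : 'M[F]_n, stablemx U X -> stablemx U Y -> stablemx U H ->
    (U == 0) || row_full U.

(* The module C(z, n) on F[t]/(t^n), basis t^0..t^(n-1) = 'e_0..'e_(n-1):
   x t^i = t^(i+1)  (t^n = 0),
   y t^i = (z + f^(i)(-z)) t^(i-1)  (t^(-1) = 0),
   h t^i = f^(i)(-z) t^i. *)
Definition Cx (n : nat) : 'M[F]_n :=
  \matrix_(i < n, j < n) ((j : nat) == i.+1)%:R.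
Definition Cy (f : {poly F}) (z : F) (n : nat) : 'M[F]_n :=
  \matrix_(i < n, j < n) (if (j.+1 == i)%N then z + (fiter f i).[- z] else 0).
Definition Ch (f : {poly F}) (z : F) (n : nat) : 'M[F]_n :=
  \matrix_(i < n, j < n) (if i == j then (fiter f i).[- z] else 0).

End HfDefs.

(* Main.v *)
Require Import Defs.
From HB Require Import structures.
From mathcomp Require Import all_boot all_order all_algebra.
Import Order.TTheory GRing.Theory Num.Theory.
Local Open Scope ring_scope.
Set Implicit Arguments. Unset Strict Implicit.

Section S.
Variable F : fieldType.
Variable f : {poly F}.
Variable n' : nat.
Local Notation n := n'.+1.
Variable z : F.
Hypothesis hz : z + (fiter f n).[- z] = 0.

Definition a i := (fiter f i).[- z].
Definition c i := z + a i.
Definition E (i : nat) : 'rV[F]_n := if (i < n)%N then delta_mx 0 (inord i) else 0.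

Lemma aS i : a i.+1 = f.[a i].
Proof. by rewrite /a /fiter iterS horner_comp. Qed.

Lemma a0 : a 0 = - z.
Proof. by rewrite /a /fiter /= hornerX. Qed.

Lemma EE i : E i 0 =1 fun j => ((j : nat) == i)%:R.
Proof.
move=> j; rewrite /E; case: ifP => hi.
  by rewrite mxE /= -(inj_eq val_inj) /= inordK.
rewrite mxE; case: eqP => // hj; move: (ltn_ord j); by rewrite hj hi.
Qed.

Lemma Eval (i : 'I_n) : E i = delta_mx 0 i.
Proof. by rewrite /E ltn_ord inord_val. Qed.

Lemma EX i : E i *m Cx F n = E i.+1.
Proof.
apply/rowP => j; rewrite mxE.
under eq_bigr => k _ do rewrite EE mxE.
rewrite EE.
case: (ltnP i n) => hi.
  rewrite (bigD1 (inord i)) //= big1 ?addr0.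
    by rewrite inordK // eqxx mul1r eq_sym.
  move=> k hk; rewrite (_ : (k : nat) == i = false) ?mul0r //.
  by apply/negbTE; apply: contra hk => /eqP <-; rewrite inord_val.
rewrite big1; last by move=> k _; rewrite (_ : (k : nat) == i = false) ?mul0r //;
  by apply/negbTE; rewrite neq_ltn (leq_trans (ltn_ord k) hi).
rewrite (_ : (j:nat) == i.+1 = false) //; apply/negbTE; by rewrite neq_ltn ltnS (leq_trans (ltnW (ltn_ord j)) hi).
Qed.

Lemma sum_pick i (g : 'I_n -> F) :
  \sum_(k < n) ((k : nat) == i)%:R * g k = if (i < n)%N then g (inord i) else 0.
Proof.
case: (ltnP i n) => hi.
  rewrite (bigD1 (inord i)) //= big1 ?addr0.
    by rewrite inordK // eqxx mul1r.
  move=> k hk; rewrite (_ : (k : nat) == i = false) ?mul0r //.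
  by apply/negbTE; apply: contra hk => /eqP <-; rewrite inord_val.
rewrite big1 // => k _; rewrite (_ : (k : nat) == i = false) ?mul0r //;
  by apply/negbTE; rewrite neq_ltn (leq_trans (ltn_ord k) hi).
Qed.

Lemma EY i : E i *m Cy f z n = if i is m.+1 then c i *: E m else 0.
Proof.
apply/rowP => j; rewrite mxE.
under eq_bigr => k _ do rewrite EE mxE.
rewrite sum_pick.
case: (ltnP i n) => hi.
  rewrite inordK //. case: i hi => [|m] hi; first by rewrite /= mxE.
  by rewrite mxE EE eqSS; case: eqP => _; rewrite ?mulr1 ?mulr0.
case: i hi => [|m] hi; first by rewrite mxE.
rewrite mxE EE; case: eqP => hj; last by rewrite mulr0.
have -> : m.+1 = n by apply/anti_leq; rewrite hi -hj ltn_ord.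
by rewrite /c /a hz mul0r.
Qed.

Lemma EH i : E i *m Ch f z n = a i *: E i.
Proof.
apply/rowP => j; rewrite mxE.
under eq_bigr => k _ do rewrite EE mxE.
rewrite sum_pick mxE EE.
case: (ltnP i n) => hi.
  rewrite -(inj_eq val_inj) /= inordK // eq_sym.
  by case: eqP => _; rewrite ?mulr1 ?mulr0.
rewrite (_ : (j:nat) == i = false) ?mulr0 //.
by apply/negbTE; rewrite neq_ltn (leq_trans (ltn_ord j) hi).
Qed.

Lemma EHk i k : E i *m (Ch f z n) ^+ k = a i ^+ k *: E i.
Proof.
elim: k => [|k IH]; first by rewrite expr0 mulmx1 expr0 scale1r.
by rewrite exprSr mulmxA IH -scalemxAl EH scalerA -exprSr.
Qed.

Lemma EfH i : E i *m mxeval f (Ch f z n) = a i.+1 *: E i.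
Proof.
rewrite /mxeval mulmx_sumr aS horner_coef scaler_suml.
apply: eq_bigr => k _.
by rewrite -scalemxAr EHk scalerA.
Qed.

Lemma mx_ext (A B : 'M[F]_n) : (forall i, (i < n)%N -> E i *m A = E i *m B) -> A = B.
Proof.
move=> h; apply/row_matrixP => i; rewrite !rowE -Eval; exact: h.
Qed.


Lemma vY (v : 'rV[F]_n) l :
  (v *m Cy f z n) 0 l = if (l.+1 < n)%N then v 0 (inord l.+1) * c l.+1 else 0.
Proof.
rewrite mxE.
have -> : \sum_j v 0 j * Cy f z n j l = \sum_(k < n) ((k : nat) == l.+1)%:R * (v 0 k * c k).
  apply: eq_bigr => k _; rewrite mxE eq_sym.
  by case: eqP => [->|_]; rewrite ?mul1r ?mul0r ?mulr0.
by rewrite sum_pick; case: ifP => // h; rewrite inordK.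
Qed.

Lemma module_part : Hf_module f (Cx F n) (Cy f z n) (Ch f z n).
Proof.
split; apply: mx_ext => i hi.
- by rewrite !mulmxA EX EH EfH -scalemxAl EX.
- rewrite !mulmxA EH -scalemxAl EY; case: i hi => [|m] hi.
    by rewrite scaler0 mul0mx.
  by rewrite -scalemxAl EfH !scalerA mulrC.
- rewrite !mulmxBr !mulmxA EX EY EY EfH EH -scalerBl.
  case: i hi => [|m] hi.
    by rewrite mul0mx subr0 a0 /c opprK addrC.
  by rewrite -scalemxAl EX -scalerBl /c opprD addrACA subrr add0r.
Qed.


Lemma simple_nec : Hf_simple (Cx F n) (Cy f z n) (Ch f z n) ->
  forall i : nat, (0 < i < n)%N -> c i != 0.
Proof.
move=> [_ Hs] i /andP[i0 hin]; apply/eqP => hc.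
pose U : 'M[F]_n := \matrix_(k, l) (((k:nat) == l) && (i <= k)%N)%:R.
have rowU : forall k : 'I_n, row k U = if (i <= k)%N then E k else 0.
  move=> k; apply/rowP => l; rewrite !mxE.
  case: ifP => hk; last by rewrite andbF mxE.
  by rewrite EE andbT eq_sym.
have EU : forall k, (i <= k)%N -> (E k <= U)%MS.
  move=> k hk; case: (ltnP k n) => hkn.
    by rewrite (_ : E k = row (inord k) U) ?row_sub // rowU inordK // hk.
  by rewrite /E ltnNge hkn sub0mx.
have stab : forall M, (forall k, (i <= k)%N -> (E k *m M <= U)%MS) -> stablemx U M.
  move=> M hM; apply/row_subP => k; rewrite row_mul rowU.
  by case: ifP => hk; [exact: hM | rewrite mul0mx sub0mx].
have sX : stablemx U (Cx F n).
  apply: stab => k hk; rewrite EX; apply: EU; exact: leqW.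
have sY : stablemx U (Cy f z n).
  apply: stab => k hk; rewrite EY; case: k hk => [|m] hm; first by rewrite sub0mx.
  case: (eqVneq m.+1 i) => [hmi|hmi].
    by rewrite hmi hc scale0r sub0mx.
  by apply: scalemx_sub; apply: EU; rewrite -ltnS ltn_neqAle eq_sym hmi.
have sH : stablemx U (Ch f z n).
  apply: stab => k hk; rewrite EH; exact: scalemx_sub (EU _ hk).
case/orP: (Hs U sX sY sH).
- move=> /eqP U0; have := congr1 (fun M : 'M[F]_n => M (inord i) (inord i)) U0.
  by rewrite !mxE inordK // eqxx leqnn /= => /eqP; rewrite oner_eq0.
- move=> /(submx_full (E 0)) /submxP[D hD].
  have := congr1 (fun M : 'rV[F]_n => M 0 (inord 0)) hD.
  rewrite EE inordK // eqxx mxE big1; first by move/eqP; rewrite oner_eq0.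
  move=> k _; rewrite mxE inordK //.
  case: (k : nat) => [|kk] /=; first by rewrite leqNgt i0 mulr0.
  by rewrite mulr0.
Qed.


Lemma simple_suff : (forall i : nat, (0 < i < n)%N -> c i != 0) ->
  Hf_simple (Cx F n) (Cy f z n) (Ch f z n).
Proof.
move=> hc; split => // U sX sY sH.
case: eqP => [_ //|U0].
rewrite orFb; have {}U0 : U != 0 by apply/eqP.
have claim : forall m (v : 'rV[F]_n), (v <= U)%MS ->
    (forall j : 'I_n, (m < j)%N -> v 0 j = 0) -> (exists j, v 0 j != 0) ->
    (E 0 <= U)%MS.
  elim=> [|m IH] v hv hz0 [j hj].
    have j0 : (j : nat) = 0%N.
      by case: (j : nat) (hz0 j) hj => // k ->; rewrite ?eqxx.
    have -> : E 0 = (v 0 j)^-1 *: v; last exact: scalemx_sub.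
    apply/rowP => l; rewrite EE mxE.
    case: (eqVneq (l : nat) 0%N) => [l0|l0].
      by rewrite (_ : l = j) ?mulVf //; apply: val_inj; rewrite /= l0 j0.
    by rewrite (hz0 l) ?mulr0 // lt0n.
  case: (boolP ((m.+1 < n)%N && (v 0 (inord m.+1) != 0))) => [/andP[hm hvm]|hno].
    apply: (IH (v *m Cy f z n)).
    - exact: submx_trans (submxMr _ hv) sY.
    - move=> l hl; rewrite vY; case: ifP => // hl1.
      by rewrite hz0 ?mul0r // inordK.
    - exists (inord m); rewrite vY inordK ?(ltnW hm) // hm mulf_neq0 //.
      by apply: hc; rewrite hm.
  apply: (IH v hv) => //.
  move=> l hl; case: (eqVneq (l : nat) m.+1) => [hl1|hl1]; last first.
    by apply: hz0; rewrite ltn_neqAle eq_sym hl1.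
  move: hno; rewrite -hl1 ltn_ord /= inord_val negbK => /eqP //.
  exists j; exact: hj.
have E0 : (E 0 <= U)%MS.
  have [r hr] : exists r, row r U != 0.
    apply/existsP; apply: contraR U0; rewrite negb_exists => /forallP h.
    by apply/eqP/row_matrixP => r; rewrite row0; apply/eqP; rewrite -[_ == _]negbK h.
  have [j hj] : exists j, row r U 0 j != 0.
    apply/existsP; apply: contraR hr; rewrite negb_exists => /forallP h.
    by apply/eqP/rowP => j; rewrite [RHS]mxE; apply/eqP; rewrite -[_ == _]negbK h.
  by apply: (claim n (row r U) (row_sub _ _)) => //; [move=> l hl; move: (ltn_ord l); rewrite ltnNge (ltnW hl) | exists j].
have Ek : forall k, (E k <= U)%MS.
  elim=> [|k IH] //; rewrite -EX; exact: submx_trans (submxMr _ IH) sX.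
by rewrite -sub1mx; apply/row_subP => k; rewrite row1 -Eval.
Qed.

End S.

Unset Implicit Arguments. Set Strict Implicit.

Theorem lemma11 (F : fieldType) (f : {poly F}) (n : nat) (z : F)
    (hn : (0 < n)%N) (hz : z + (fiter f n).[- z] = 0) :
  Hf_module f (Cx F n) (Cy f z n) (Ch f z n) /\
  (Hf_simple (Cx F n) (Cy f z n) (Ch f z n) <->
     forall i : nat, (0 < i < n)%N -> z + (fiter f i).[- z] != 0).
Proof.
case: n hn hz => [//|n'] _ hz.
split; first exact: module_part.
split; [exact: simple_nec | exact: simple_suff].
Qed.
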